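(* Let $\Gamma$ be an infinite countable group and $X$ the Cantor space. Each of the following subsets of $A(\Gamma)$ is $G_\delta$: (1) the actions with the dynamical comparison property; (2) the actions $\alpha$ such that $T(\alpha)$ is almost unperforated; (3) the actions $\alpha$ such that $T(\alpha)$ is unperforated; (4) the actions $\alpha$ such that $T(\alpha)$ is cancellative; (5) the actions $\alpha$ such that $\le$ is a partial order on $T(\alpha)$.
   Context: $A(\Gamma)$ is the space of actions of $\Gamma$ on $X$ by homeomorphisms, viewed as a closed subset of $\mathrm{Homeo}(X)^\Gamma$ with the product topology, where $\mathrm{Homeo}(X)$ carries its Polish topology (basic identity neighbourhoods: stabilizers of finite clopen partitions). Clopen type semigroup of $\alpha$: let $Y = X\times\mathbb N$, and let $\tilde\Gamma=\Gamma\times\mathfrak S$ ($\mathfrak S$ the permutation group of $\mathbb N$) act on $Y$ by $(\gamma,\sigma)(x,n)=(\alpha(\gamma)x,\sigma(n))$. A clopen $A\subseteq Y$ is bounded if $A\cap(X\times\{n\})=\emptyset$ for all large $n$. Bounded clopen $A,B$ are equidecomposable if there are clopen $A_1,\dots,A_n$ and $\tilde\gamma_i\in\tilde\Gamma$ with $A=\bigsqcup_i A_i$, $B=\bigsqcup_i\tilde\gamma_iA_i$. $T(\alpha)$ is the set of classes $[A]$, with $[A]+[B]=[A'\sqcup B']$ for disjoint representatives; $0=[\emptyset]$. $a\le b$ iff $b=a+c$ for some $c$. Almost unperforated: $(n+1)a\le nb\Rightarrow a\le b$ for $n\in\mathbb N$. Unperforated: $na\le nb\Rightarrow a\le b$ for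 $n\ge1$. Cancellative: $a+b=a+c\Rightarrow b=c$. Dynamical comparison: for all nonempty clopen $A,B\subseteq X$ with $\mu(A)<\mu(B)$ for every $\alpha$-invariant Borel probability measure $\mu$, one has $[A\times\{0\}]\le[B\times\{0\}]$. *)

(* Defs.v *)
From HB Require Import structures.
From mathcomp Require Import all_boot all_order all_algebra.
From mathcomp Require Import all_classical all_reals all_analysis.
From mathcomp Require Import Rstruct.

Set Implicit Arguments.
Unset Strict Implicit.
Unset Printing Implicit Defensive.

Local Open Scope classical_set_scope.

Definition X : topologicalType := cantor_space.

Definition Y : topologicalType := (cantor_space * nat)%type.

Definition clopen {T : topologicalType} (A : set T) := open A /\ closed A.

Definition homeo (f : X -> X) :=
  exists g : X -> X, [/\ cancel f g, cancel g f, continuous f & continuous g].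

Definition is_action (G : groupType) (a : G -> X -> X) :=
  [/\ forall g, homeo (a g), a 1%g = id & forall g h, a (g * h)%g = a g \o a h].

(* Topology of A(Gamma) (subspace of Homeo(X)^Gamma, product topology,
   Homeo(X) with the topology whose identity neighbourhoods are stabilizers
   of finite clopen partitions): a basic neighbourhood of the action a is
   { b | b(g_i)(P_i) = a(g_i)(P_i) for i < k } with P_i clopen. *)
Definition A_open (G : groupType) (U : set (G -> X -> X)) :=
  forall a, is_action a -> U a ->
    exists (k : nat) (gs : 'I_k -> G) (P : 'I_k -> set X),
      (forall i, clopen (P i)) /\
      (forall b, is_action b ->
         (forall i, b (gs i) @` P i = a (gs i) @` P i) -> U b).

Definition A_Gdelta (G : groupType) (S : set (G -> X -> X)) :=
  exists U : nat -> set (G -> X -> X),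
    (forall n, A_open (U n)) /\
    (forall a, is_action a -> (S a <-> forall n, U n a)).

Definition bounded (A : set Y) := exists N : nat, forall x n, (N <= n)%N -> ~ A (x, n).

Definition bclopen (A : set Y) := clopen A /\ bounded A.

(* action of (g, sigma) in Gamma x Sym(N) on Y *)
Definition tact (G : groupType) (a : G -> X -> X) (g : G) (s : nat -> nat) (p : Y) : Y :=
  (a g p.1, s p.2).

Definition pw_disjoint (k : nat) (P : 'I_k -> set Y) :=
  forall i j, i != j -> P i `&` P j = set0.

Definition eqd (G : groupType) (a : G -> X -> X) (A B : set Y) :=
  exists (k : nat) (P : 'I_k -> set Y) (gs : 'I_k -> G) (ss : 'I_k -> nat -> nat),
    [/\ forall i, clopen (P i),
        forall i, bijective (ss i),
        (A = \bigcup_i P i /\ pw_disjoint P) &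
        (B = \bigcup_i (tact a (gs i) (ss i) @` P i) /\
         pw_disjoint (fun i => tact a (gs i) (ss i) @` P i))].

(* [C] = [A] + [B] in T(a) *)
Definition is_sum (G : groupType) (a : G -> X -> X) (C A B : set Y) :=
  exists A' B', [/\ bclopen A' /\ bclopen B', eqd a A A', eqd a B B',
                    A' `&` B' = set0 & eqd a C (A' `|` B')].

(* [A] <= [B] in T(a): [B] = [A] + c for some c *)
Definition tle (G : groupType) (a : G -> X -> X) (A B : set Y) :=
  exists C, bclopen C /\ is_sum a B A C.

(* [C] = n [A] in T(a) *)
Fixpoint is_mult (G : groupType) (a : G -> X -> X) (n : nat) (A C : set Y) : Prop :=
  match n with
  | 0 => eqd a C set0
  | n'.+1 => exists D, [/\ bclopen D, is_mult a n' A D & is_sum a C D A]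
  end.

Definition almost_unperforated (G : groupType) (a : G -> X -> X) :=
  forall (n : nat) A B C D, bclopen A -> bclopen B -> bclopen C -> bclopen D ->
    is_mult a n.+1 A C -> is_mult a n B D -> tle a C D -> tle a A B.

Definition unperforated (G : groupType) (a : G -> X -> X) :=
  forall (n : nat) A B C D, (1 <= n)%N ->
    bclopen A -> bclopen B -> bclopen C -> bclopen D ->
    is_mult a n A C -> is_mult a n B D -> tle a C D -> tle a A B.

Definition cancellative (G : groupType) (a : G -> X -> X) :=
  forall A B C D, bclopen A -> bclopen B -> bclopen C -> bclopen D ->
    is_sum a D A B -> is_sum a D A C -> eqd a B C.

Definition tle_partial_order (G : groupType) (a : G -> X -> X) :=
  [/\ forall A, bclopen A -> tle a A A,
      forall A B C, bclopen A -> bclopen B -> bclopen C ->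
        tle a A B -> tle a B C -> tle a A C &
      forall A B, bclopen A -> bclopen B -> tle a A B -> tle a B A -> eqd a A B].

Definition BX := g_sigma_algebraType (@open X).

Definition invariant (G : groupType) (a : G -> X -> X)
    (mu : probability BX Rdefinitions.R) :=
  forall g (E : set BX), measurable E -> mu (a g @^-1` E) = mu E.

Definition dyn_comparison (G : groupType) (a : G -> X -> X) :=
  forall A B : set X, clopen A -> clopen B -> A !=set0 -> B !=set0 ->
    (forall mu : probability BX Rdefinitions.R, invariant a mu -> (mu A < mu B)%E) ->
    tle a (A `*` [set 0%N]) (B `*` [set 0%N]).

(* Main.v *)
Require Import Defs.
From HB Require Import structures.
From mathcomp Require Import all_boot all_order all_algebra.
From mathcomp Require Import all_classical all_reals all_analysis.
From mathcomp Require Import Rstruct Rstruct_topology.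
From mathcomp Require Import lra.

Set Implicit Arguments.
Unset Strict Implicit.
Unset Printing Implicit Defensive.
Local Open Scope classical_set_scope.


Lemma group_enum (G : groupType) : countable [set: G] ->
  exists ge : nat -> G, forall g, exists n, ge n = g.
Proof.
move=> /pfcard_geP [/seteqP[/(_ 1%g I)]//|/unsquash f].
exists f => g; have [n _ <-] := @surj _ _ _ _ f g I; by exists n.
Qed.

Definition PM := (@prod_topology nat (fun _ => (bool : pseudoMetricType Rdefinitions.R))).
Definition PM2 : Type := PM.
HB.instance Definition _ := PseudoMetric.on PM2.
HB.instance Definition _ := isPointed.Build PM2 (fun _ => false).

Lemma clopen_enum : exists cl : nat -> set X,
  (forall j, clopen (cl j)) /\ (forall C, clopen C -> exists j, cl j = C).
Proof.
have cpt : compact [set: PM2] by exact: cantor_space_compact.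
have /unsquash f := @clopen_surj Rdefinitions.R PM2 cpt.
exists f; split.
  by move=> j; exact: (@funS _ _ _ _ f j I).
move=> C cC; have [n _ <-] := @surj _ _ _ _ f C cC; by exists n.
Qed.

Section Top.
Variable G : groupType.
Implicit Types a b : G -> X -> X.
Local Notation act := (G -> X -> X).

Definition nbh (k : nat) (gs : nat -> G) (Ps : nat -> set X) a b :=
  forall i, (i < k)%N -> b (gs i) @` Ps i = a (gs i) @` Ps i.

Definition NB a (V : act -> Prop) :=
  exists k gs Ps, (forall i, (i < k)%N -> clopen (Ps i)) /\
    forall b, is_action b -> nbh k gs Ps a b -> V b.

Definition Op (U : act -> Prop) := forall a, is_action a -> U a -> NB a U.

Definition Gd (S : act -> Prop) := exists U : nat -> act -> Prop,
  (forall n, Op (U n)) /\ forall a, is_action a -> (S a <-> forall n, U n a).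

Lemma NB_mono a V W : NB a V -> (forall b, is_action b -> V b -> W b) -> NB a W.
Proof.
move=> [k [gs [Ps [cP H]]]] VW; exists k, gs, Ps; split => // b ab nb.
exact/VW/H.
Qed.

Lemma NB_const a (P : Prop) : P -> NB a (fun _ => P).
Proof. by move=> p; exists 0%N, (fun _ => 1%g), (fun _ => set0). Qed.

Lemma NB_and a V W : NB a V -> NB a W -> NB a (fun b => V b /\ W b).
Proof.
move=> [k1 [gs1 [Ps1 [c1 H1]]]] [k2 [gs2 [Ps2 [c2 H2]]]].
exists (k1 + k2)%N, (fun i => if (i < k1)%N then gs1 i else gs2 (i - k1)%N),
  (fun i => if (i < k1)%N then Ps1 i else Ps2 (i - k1)%N); split.
  move=> i ik; case: ifP => ik1; first exact: c1.
  apply: c2; rewrite ltn_subLR //; by rewrite leqNgt ik1.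
move=> b ab nb; split.
  apply: H1 => // i ik1; have := nb i (ltn_addr _ ik1); by rewrite ik1.
apply: H2 => // i ik2; have := nb (i + k1)%N.
have hh : (i + k1 < k1)%N = false by rewrite ltnNge leq_addl.
rewrite hh addnK; apply; by rewrite addnC ltn_add2l.
Qed.

Lemma NB_self a g P : clopen P -> NB a (fun b => b g @` P = a g @` P).
Proof.
move=> cP; exists 1%N, (fun _ => g), (fun _ => P); split => // b _ H; exact: (H 0%N).
Qed.

Lemma NB_fin a (I : finType) (V : I -> act -> Prop) :
  (forall i, NB a (V i)) -> NB a (fun b => forall i, V i b).
Proof.
move=> HV; suff : forall s : seq I, NB a (fun b => forall i, i \in s -> V i b).
  move=> /(_ (enum I)) H; refine (@NB_mono a _ _ H _) => b _ H2 i; apply: H2; by rewrite mem_enum.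
elim => [|x s IH].
  by refine (@NB_mono a _ _ (@NB_const a True Logic.I) _) => b _ _ i; rewrite in_nil.
refine (@NB_mono a _ _ (NB_and (HV x) IH) _) => b _ [H1 H2] i; rewrite inE => /orP[/eqP->//|].
exact: H2.
Qed.

Lemma Op_A_open U : Op U -> A_open U.
Proof.
move=> HU a aa Ua; have [k [gs [Ps [cP H]]]] := HU a aa Ua.
exists k, (fun i : 'I_k => gs i), (fun i : 'I_k => Ps i); split.
  by move=> i; apply: cP.
move=> b ab Hb; apply: H => // i ik; exact: (Hb (Ordinal ik)).
Qed.

Lemma Gd_A S : Gd S -> A_Gdelta S.
Proof. move=> [U [HU HS]]; exists U; split => // n; exact: Op_A_open. Qed.

Lemma Op_Gd S : Op S -> Gd S.
Proof.
move=> HS; exists (fun _ => S); split => // a _; split => [H n //|]; exact: (fun H => H 0%N).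
Qed.

Lemma Op_ext S T : (forall a, is_action a -> (S a <-> T a)) -> Op S -> Op T.
Proof.
move=> ST HS a aa Ta; have /HS := (proj2 (ST a aa) Ta) => /(_ aa) H.
refine (NB_mono H _) => b ab; exact: (proj1 (ST b ab)).
Qed.

Lemma Gd_ext S T : (forall a, is_action a -> (S a <-> T a)) -> Gd S -> Gd T.
Proof.
move=> ST [U [HU HS]]; exists U; split => // a aa; rewrite -ST //; exact: HS.
Qed.

Lemma Op_True : Op (fun _ => True).
Proof. by move=> a _ _; exact: NB_const. Qed.

Lemma Op_or S T : Op S -> Op T -> Op (fun a => S a \/ T a).
Proof.
move=> HS HT a aa [Sa|Ta].
  by refine (NB_mono (HS a aa Sa) _) => b _ ?; left.
by refine (NB_mono (HT a aa Ta) _) => b _ ?; right.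
Qed.

Lemma Gd_forall (T : countType) (Q : T -> act -> Prop) :
  (forall t, Gd (Q t)) -> Gd (fun a => forall t, Q t a).
Proof.
move=> HQ; have [U HU] := choice HQ.
pose W p := match @unpickle (T * nat)%type p with
  | Some tn => U tn.1 tn.2 | None => fun _ => True end.
exists W; split.
  move=> p; rewrite /W; case: unpickle => [[t n]|]; last exact: Op_True.
  exact: (proj1 (HU t)).
move=> a aa; split.
  move=> H p; rewrite /W; case: unpickle => [[t n]|] //=.
  by have [_ /(_ a aa) [+ _]] := HU t; apply.
move=> H t; have [_ /(_ a aa) [_]] := HU t; apply => n.
by have := H (pickle (t, n)); rewrite /W pickleK.
Qed.

Lemma Gd_and S T : Gd S -> Gd T -> Gd (fun a => S a /\ T a).
Proof.
move=> HS HT; have := @Gd_forall bool (fun t : bool => if t then S else T).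
case => [[]//|U HU]; exists U; split; first exact: HU.1.
move=> a aa; rewrite -HU.2 //; split; first by move=> [? ?] [].
by move=> H; split; [exact: (H true)|exact: (H false)].
Qed.

Lemma Gd_or S T : Gd S -> Gd T -> Gd (fun a => S a \/ T a).
Proof.
move=> [U [HU HS]] [V [HV HT]].
have HW : Gd (fun a => forall nm : nat * nat, U nm.1 a \/ V nm.2 a).
  by apply: Gd_forall => -[n m]; exact/Op_Gd/Op_or.
refine (Gd_ext _ HW) => a aa; split.
  move=> H; have [Sa|nSa] := pselect (S a); first by left.
  right; apply/HT => // m.
  have /existsNP [n nU] : ~ forall n, U n a by move=> H2; apply: nSa; apply/HS.
  by case: (H (n, m)).
case=> [/(HS a aa) H|/(HT a aa) H] [n m]; [left|right]; exact: H.
Qed.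

Lemma Gd_impl_const (P : Prop) S : (P -> Gd S) -> Gd (fun a => P -> S a).
Proof.
move=> H; have [p|np] := pselect P.
  by refine (Gd_ext _ (H p)) => a _; split => [Sa _|/(_ p)].
exists (fun _ _ => True); split => [n|a _]; first exact: Op_True.
by split.
Qed.

Lemma Gd_closed (ge : nat -> G) (cl : nat -> set X) :
  (forall g, exists n, ge n = g) -> (forall j, clopen (cl j)) ->
  (forall C, clopen C -> exists j, cl j = C) ->
  forall S, Op (fun a => ~ S a) -> Gd S.
Proof.
move=> geS clC clS S HS.
pose agr m a b := forall i j : 'I_m, b (ge i) @` cl j = a (ge i) @` cl j.
have NBagr m a : NB a (agr m a).
  refine (NB_fin _) => i.
  refine (@NB_fin a 'I_m (fun j b => b (ge i) @` cl j = a (ge i) @` cl j) _) => j.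
  exact: NB_self.
exists (fun m a => exists b, is_action b /\ S b /\ agr m a b); split.
  move=> m a aa [b [ab [Sb Hb]]].
  refine (NB_mono (NBagr m a) _) => c ac Hc; exists b; split => //; split => // i j.
  by rewrite Hb Hc.
move=> a aa; split.
  by move=> Sa m; exists a; split => //; split.
move=> H; apply: contrapT => nSa.
have [k [gs [Ps [cP Hn]]]] := HS a aa nSa.
have [ig Hig] := choice (fun i => geS (gs i)).
have [jp Hjp] : {jp : nat -> nat & forall i, (i < k)%N -> cl (jp i) = Ps i}.
  apply: (@choice nat nat (fun i j => (i < k)%N -> cl j = Ps i)) => i.
  have [ik|ik] := boolP (i < k)%N.
    by have [j Hj] := clS _ (cP i ik); exists j.
  by exists 0%N.
pose m := (\max_(i < k) (ig i + jp i)).+1.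
have [b [ab [Sb Hb]]] := H m.
apply: (Hn b ab _ Sb) => i ik.
have bnd : (ig i + jp i < m)%N.
  by rewrite ltnS; exact: (@leq_bigmax _ (fun i : 'I_k => ig i + jp i) (Ordinal ik)).
have h1 : (ig i < m)%N by apply: leq_ltn_trans bnd; exact: leq_addr.
have h2 : (jp i < m)%N by apply: leq_ltn_trans bnd; exact: leq_addl.
rewrite -Hig -(Hjp i ik); exact: (Hb (Ordinal h1) (Ordinal h2)).
Qed.

End Top.


Definition slice (P : set Y) (n : nat) : set X := [set x | P (x, n)].

Lemma pair_cont (n : nat) : continuous (fun x : X => ((x, n) : Y)).
Proof.
move=> x.
have := @cvg_pair _ _ _ (nbhs x) (nbhs x) (nbhs n) _ _ _ id (fun=> n) cvg_id (cvg_cst n).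
exact.
Qed.

Lemma slice_clopen P n : clopen P -> clopen (slice P n).
Proof.
move=> [oP cP]; split.
  by apply: (@open_comp _ _ (fun x : X => ((x, n) : Y))) => // x _; exact: pair_cont.
by apply: (@preimage_closed _ _ (fun x : X => ((x, n) : Y))) => // x _; exact: pair_cont.
Qed.

Lemma openY (P : set Y) : (forall n, open (slice P n)) -> open P.
Proof.
move=> H; rewrite openE => -[x n] Pxn.
exists (slice P n, [set n]) => /=.
  split; last by apply/principal_filterP.
  by apply: open_nbhs_nbhs; split => //; exact: H.
by move=> [y m] /= [Py ->].
Qed.

Lemma clopenY (P : set Y) : (forall n, clopen (slice P n)) -> clopen P.
Proof.
move=> H; split; first by apply: openY => n; case: (H n).
rewrite -openC; apply: openY => n; apply: closed_openC; by case: (H n).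
Qed.

Definition bndN (P : set Y) N := forall x n, (N <= n)%N -> ~ P (x, n).

Lemma bndN_sub (P Q : set Y) N : P `<=` Q -> bndN Q N -> bndN P N.
Proof. by move=> PQ HQ x n Nn /PQ; apply: HQ. Qed.

Lemma bounded_bndN P : bounded P -> exists N, bndN P N.
Proof. by []. Qed.

Section Eqd.
Variable G : groupType.
Implicit Types a b : G -> X -> X.

Lemma tact_img_sub a b g s (P : set Y) N : bndN P N ->
  (forall n, (n < N)%N -> b g @` slice P n = a g @` slice P n) ->
  tact b g s @` P `<=` tact a g s @` P.
Proof.
move=> HN H [y m] [[x n] Pxn]; rewrite /tact /= => -[<- <-].
have nN : (n < N)%N by rewrite ltnNge; apply/negP => /(HN x); apply.
have : (a g @` slice P n) (b g x) by rewrite -H //; exists x.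
by move=> [x' Px' e]; exists (x', n) => //; rewrite /tact /= e.
Qed.

Lemma tact_img_eq a b g s (P : set Y) N : bndN P N ->
  (forall n, (n < N)%N -> b g @` slice P n = a g @` slice P n) ->
  tact b g s @` P = tact a g s @` P.
Proof.
move=> HN H; apply/seteqP; split; first exact: tact_img_sub H.
by apply: tact_img_sub HN _ => n nN; rewrite H.
Qed.

End Eqd.
Section Eqd2.
Variable G : groupType.
Implicit Types a b : G -> X -> X.
Lemma NB_eqd a (A B : set Y) N : bndN A N -> eqd a A B -> NB a (fun b => eqd b A B).
Proof.
move=> HN [k [P [gs [ss [cP bij [AU pd] [BU pd2]]]]]].
have PN i : bndN (P i) N by apply: bndN_sub HN; rewrite AU => p Pp; exists i.
have H : NB a (fun b => forall (i : 'I_k) (n : 'I_N),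
    b (gs i) @` slice (P i) n = a (gs i) @` slice (P i) n).
  refine (NB_fin _) => i.
  refine (@NB_fin _ a 'I_N (fun n b => b (gs i) @` slice (P i) n = a (gs i) @` slice (P i) n) _) => n.
  by apply: NB_self; apply: slice_clopen; exact: cP.
refine (NB_mono H _) => b ab Hb.
have E : (fun i => tact b (gs i) (ss i) @` P i) = (fun i => tact a (gs i) (ss i) @` P i).
  apply: funext => i; apply: (tact_img_eq _ (PN i)) => n nN.
  exact: (Hb i (Ordinal nN)).
exists k, P, gs, ss; split => //; by rewrite E.
Qed.
End Eqd2.

Section Alg.
Variable G : groupType.
Implicit Types a b : G -> X -> X.

Lemma NB_eqdb a (A B : set Y) : bounded A -> eqd a A B -> NB a (fun b => eqd b A B).
Proof. move=> [N HN]; exact: (NB_eqd HN). Qed.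

Lemma NB_is_sum a (C A B : set Y) : bounded C -> bounded A -> bounded B ->
  is_sum a C A B -> NB a (fun b => is_sum b C A B).
Proof.
move=> bC bA bB [A' [B' [bAB e1 e2 d e3]]].
have H := NB_and (NB_and (NB_eqdb bA e1) (NB_eqdb bB e2)) (NB_eqdb bC e3).
by refine (NB_mono H _) => b _ [[h1 h2] h3]; exists A', B'; split.
Qed.

Lemma NB_tle a (A B : set Y) : bounded A -> bounded B ->
  tle a A B -> NB a (fun b => tle b A B).
Proof.
move=> bA bB [C [bC S]].
refine (NB_mono (NB_is_sum bB bA bC.2 S) _) => b _ h; by exists C.
Qed.

Lemma NB_is_mult a n (A C : set Y) : bounded A -> bounded C ->
  is_mult a n A C -> NB a (fun b => is_mult b n A C).
Proof.
move=> bA; elim: n C => [|n IH] C bC /=; first exact: NB_eqdb.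
move=> [D [bD M S]].
have H := NB_and (IH D bD.2 M) (NB_is_sum bC bD.2 bA S).
by refine (NB_mono H _) => b _ [h1 h2]; exists D; split.
Qed.

Lemma Op_eqd (A B : set Y) : bounded A -> Op (fun a : G -> X -> X => eqd a A B).
Proof. by move=> bA a _; exact: NB_eqdb. Qed.
Lemma Op_is_sum (C A B : set Y) : bounded C -> bounded A -> bounded B ->
  Op (fun a : G -> X -> X => is_sum a C A B).
Proof. by move=> bC bA bB a _; exact: NB_is_sum. Qed.
Lemma Op_tle (A B : set Y) : bounded A -> bounded B -> Op (fun a : G -> X -> X => tle a A B).
Proof. by move=> bA bB a _; exact: NB_tle. Qed.
Lemma Op_is_mult n (A C : set Y) : bounded A -> bounded C ->
  Op (fun a : G -> X -> X => is_mult a n A C).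
Proof. by move=> bA bC a _; exact: NB_is_mult. Qed.

Lemma Op_and S T : Op S -> Op T -> Op (fun a : G -> X -> X => S a /\ T a).
Proof.
move=> HS HT a aa [Sa Ta]; exact: NB_and (HS a aa Sa) (HT a aa Ta).
Qed.

End Alg.


Definition bcset (cl : nat -> set X) (s : seq nat) : set Y :=
  [set p | (p.2 < size s)%N /\ cl (nth 0%N s p.2) p.1].
Definition bc (cl : nat -> set X) (m : nat) : set Y :=
  match @unpickle (seq nat) m with Some s => bcset cl s | None => set0 end.

Lemma clopen0' : clopen (set0 : set X).
Proof. split; [exact: open0|exact: closed0]. Qed.

Lemma bc_bclopen cl m : (forall j, clopen (cl j)) -> bclopen (bc cl m).
Proof.
move=> clC; rewrite /bc; case: unpickle => [s|]; last first.
  split; last by exists 0%N => x n _ [].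
  by apply: clopenY => n; exact: clopen0'.
split; last by exists (size s) => x n sn [/= ns _]; move: sn; rewrite leqNgt ns.
apply: clopenY => n; have [ns|ns] := boolP (n < size s)%N.
  suff -> : slice (bcset cl s) n = cl (nth 0%N s n) by [].
  by apply/seteqP; split => x /=; [case|split].
suff -> : slice (bcset cl s) n = set0 by exact: clopen0'.
by apply/seteqP; split => x //= [nss]; move: ns; rewrite nss.
Qed.

Lemma bc_surj cl : (forall C, clopen C -> exists j, cl j = C) ->
  forall A, bclopen A -> exists m, bc cl m = A.
Proof.
move=> clS A [cA [N HN]].
have [jf Hjf] := choice (fun n => clS _ (slice_clopen n cA)).
exists (pickle (map jf (iota 0 N))); rewrite /bc pickleK.
apply/seteqP; split => -[x n] /=.
  rewrite /bcset /= size_map size_iota => -[nN]; rewrite (nth_map 0%N) ?size_iota //.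
  by rewrite nth_iota // add0n Hjf.
move=> Axn; have nN : (n < N)%N by rewrite ltnNge; apply/negP => /(HN x); apply.
rewrite /bcset /= size_map size_iota (nth_map 0%N) ?size_iota // nth_iota // add0n Hjf.
by split.
Qed.

Section Props.
Variable G : groupType.
Variables (ge : nat -> G) (cl : nat -> set X).
Hypothesis geS : forall g, exists n, ge n = g.
Hypothesis clC : forall j, clopen (cl j).
Hypothesis clS : forall C, clopen C -> exists j, cl j = C.
Local Notation act := (G -> X -> X).

Lemma Gd_imp (S T : act -> Prop) : Op S -> Op T -> Gd (fun a => S a -> T a).
Proof.
move=> HS HT.
have h1 : Gd (fun a => ~ S a).
  apply: (Gd_closed geS clC clS); refine (Op_ext _ HS) => a _.
  by split => [s ns|/contrapT].
refine (Gd_ext _ (Gd_or h1 (Op_Gd HT))) => a _; split.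
  by move=> [ns s|t _].
by move=> H; have [s|ns] := pselect (S a); [right; exact: H|left].
Qed.

Let bcb m : bounded (bc cl m) := (bc_bclopen m clC).2.
Let bcc m : bclopen (bc cl m) := bc_bclopen m clC.

Lemma cancel_Gd : Gd (@cancellative G).
Proof.
have H : Gd (fun a : act => forall mA mB mC mD : nat,
   is_sum a (bc cl mD) (bc cl mA) (bc cl mB) /\ is_sum a (bc cl mD) (bc cl mA) (bc cl mC) ->
   eqd a (bc cl mB) (bc cl mC)).
  refine (Gd_forall _) => mA; refine (Gd_forall _) => mB.
  refine (Gd_forall _) => mC; refine (Gd_forall _) => mD.
  apply: Gd_imp; last exact: Op_eqd.
  by apply: Op_and; apply: Op_is_sum.
refine (Gd_ext _ H) => a aa; split; last first.
  move=> Hc mA mB mC mD [S1 S2]; exact: (Hc _ _ _ _ (bcc mA) (bcc mB) (bcc mC) (bcc mD) S1 S2).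
move=> Hc A B C D bA bB bC bD S1 S2.
have [mA ?] := bc_surj clS bA; subst; have [mB ?] := bc_surj clS bB; subst.
have [mC ?] := bc_surj clS bC; subst; have [mD ?] := bc_surj clS bD; subst.
exact: (Hc mA mB mC mD (conj S1 S2)).
Qed.

Lemma aunperf_Gd : Gd (@almost_unperforated G).
Proof.
have H : Gd (fun a : act => forall (n mA mB mC mD : nat),
   is_mult a n.+1 (bc cl mA) (bc cl mC) /\ is_mult a n (bc cl mB) (bc cl mD) /\
   tle a (bc cl mC) (bc cl mD) -> tle a (bc cl mA) (bc cl mB)).
  refine (Gd_forall _) => n; refine (Gd_forall _) => mA; refine (Gd_forall _) => mB.
  refine (Gd_forall _) => mC; refine (Gd_forall _) => mD.
  apply: Gd_imp; last exact: Op_tle.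
  apply: Op_and; first exact: Op_is_mult.
  by apply: Op_and; [exact: Op_is_mult|exact: Op_tle].
refine (Gd_ext _ H) => a aa; split; last first.
  move=> Hc n mA mB mC mD [S1 [S2 S3]]; exact: (Hc n _ _ _ _ (bcc mA) (bcc mB) (bcc mC) (bcc mD) S1 S2 S3).
move=> Hc n A B C D bA bB bC bD S1 S2 S3.
have [mA ?] := bc_surj clS bA; subst; have [mB ?] := bc_surj clS bB; subst.
have [mC ?] := bc_surj clS bC; subst; have [mD ?] := bc_surj clS bD; subst.
exact: (Hc n mA mB mC mD (conj S1 (conj S2 S3))).
Qed.

Lemma unperf_Gd : Gd (@unperforated G).
Proof.
have H : Gd (fun a : act => forall (n mA mB mC mD : nat), (1 <= n)%N ->
   is_mult a n (bc cl mA) (bc cl mC) /\ is_mult a n (bc cl mB) (bc cl mD) /\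
   tle a (bc cl mC) (bc cl mD) -> tle a (bc cl mA) (bc cl mB)).
  refine (Gd_forall _) => n; refine (Gd_forall _) => mA; refine (Gd_forall _) => mB.
  refine (Gd_forall _) => mC; refine (Gd_forall _) => mD.
  apply: Gd_impl_const => _.
  apply: Gd_imp; last exact: Op_tle.
  apply: Op_and; first exact: Op_is_mult.
  by apply: Op_and; [exact: Op_is_mult|exact: Op_tle].
refine (Gd_ext _ H) => a aa; split; last first.
  move=> Hc n mA mB mC mD n1 [S1 [S2 S3]]; exact: (Hc n _ _ _ _ n1 (bcc mA) (bcc mB) (bcc mC) (bcc mD) S1 S2 S3).
move=> Hc n A B C D n1 bA bB bC bD S1 S2 S3.
have [mA ?] := bc_surj clS bA; subst; have [mB ?] := bc_surj clS bB; subst.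
have [mC ?] := bc_surj clS bC; subst; have [mD ?] := bc_surj clS bD; subst.
exact: (Hc n mA mB mC mD n1 (conj S1 (conj S2 S3))).
Qed.

Lemma po_Gd : Gd (@tle_partial_order G).
Proof.
have H1 : Gd (fun a : act => forall mA : nat, tle a (bc cl mA) (bc cl mA)).
  refine (Gd_forall _) => mA; exact/Op_Gd/Op_tle.
have H2 : Gd (fun a : act => forall mA mB mC : nat,
    tle a (bc cl mA) (bc cl mB) /\ tle a (bc cl mB) (bc cl mC) -> tle a (bc cl mA) (bc cl mC)).
  refine (Gd_forall _) => mA; refine (Gd_forall _) => mB; refine (Gd_forall _) => mC.
  by apply: Gd_imp; [apply: Op_and|]; exact: Op_tle.
have H3 : Gd (fun a : act => forall mA mB : nat,
    tle a (bc cl mA) (bc cl mB) /\ tle a (bc cl mB) (bc cl mA) -> eqd a (bc cl mA) (bc cl mB)).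
  refine (Gd_forall _) => mA; refine (Gd_forall _) => mB.
  by apply: Gd_imp; [apply: Op_and; exact: Op_tle|exact: Op_eqd].
refine (Gd_ext _ (Gd_and H1 (Gd_and H2 H3))) => a aa; split.
  move=> [h1 [h2 h3]]; split.
  - by move=> A bA; have [mA ?] := bc_surj clS bA; subst; exact: h1.
  - move=> A B C bA bB bC; have [mA ?] := bc_surj clS bA; subst.
    have [mB ?] := bc_surj clS bB; subst; have [mC ?] := bc_surj clS bC; subst.
    by move=> t1 t2; exact: (h2 mA mB mC (conj t1 t2)).
  - move=> A B bA bB; have [mA ?] := bc_surj clS bA; subst.
    have [mB ?] := bc_surj clS bB; subst.
    by move=> t1 t2; exact: (h3 mA mB (conj t1 t2)).
move=> [h1 h2 h3]; split; first by move=> mA; exact: (h1 _ (bcc mA)).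
split; first by move=> mA mB mC [t1 t2]; exact: (h2 _ _ _ (bcc mA) (bcc mB) (bcc mC) t1 t2).
by move=> mA mB [t1 t2]; exact: (h3 _ _ (bcc mA) (bcc mB) t1 t2).
Qed.

End Props.

Import Order.TTheory GRing.Theory Num.Theory.
Local Open Scope ring_scope.

Notation RR := Rdefinitions.R.

Definition CX : Type := cantor_space.
HB.instance Definition _ := Pointed.on CX.

Lemma clopenD' : setD_closed (@clopen cantor_space).
Proof. move=> A B cA cB; rewrite setDE; apply: clopenI => //; exact: clopenC. Qed.

HB.instance Definition _ := @isRingOfSets.Build default_measure_display CX
  (@clopen cantor_space) clopen0 clopenU clopenD'.

Record premeas := PreMeas {
  pm : set cantor_space -> RR;
  pm_add : forall A B, clopen A -> clopen B -> A `&` B = set0 ->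
     pm (A `|` B) = pm A + pm B;
  pm_ge0 : forall A, clopen A -> 0 <= pm A;
  pm_T : pm setT = 1 }.

Section MU.
Variable P : premeas.

Lemma pm0 : pm P set0 = 0.
Proof.
have := pm_add P clopen0 clopen0 (setI0 _); rewrite setU0 => h; lra.
Qed.

Definition muc (A : set CX) : \bar RR := (if `[< clopen A >] then pm P A else 0)%:E.

Lemma muc_clopen A : clopen A -> muc A = (pm P A)%:E.
Proof. by move=> cA; rewrite /muc asboolT. Qed.

Lemma muc0 : muc set0 = 0%E.
Proof. by rewrite muc_clopen ?pm0 //; exact: clopen0. Qed.

Lemma muc_ge0 A : (0 <= muc A)%E.
Proof. rewrite /muc; case: asboolP => // cA; rewrite lee_fin; exact: pm_ge0. Qed.

Lemma big_setU_mem (F : nat -> set CX) n p :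
  (\big[setU/set0]_(i < n) F i) p <-> exists i, (i < n)%N /\ F i p.
Proof.
rewrite -bigcup_mkord; split; first by move=> [i /= ilt Fi]; exists i.
by move=> [i [ilt Fi]]; exists i.
Qed.

Lemma muc_fin (F : nat -> set CX) : (forall i, clopen (F i)) -> trivIset setT F ->
  forall n, clopen (\big[setU/set0]_(i < n) F i) /\
    muc (\big[setU/set0]_(i < n) F i) = (\sum_(i < n) muc (F i))%E.
Proof.
move=> cF tF; elim => [|n [IHc IHe]].
  by rewrite !big_ord0; split; [exact: clopen0|exact: muc0].
rewrite !big_ord_recr /=; split; first exact: clopenU.
have disj : (\big[setU/set0]_(i < n) F i) `&` F n = set0.
  apply/seteqP; split => // p [/big_setU_mem [i [ilt Fi]] Fn].
  have := (trivIsetP.1 tF) i n I I; rewrite neq_ltn ilt => /(_ isT) e.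
  by have : (F i `&` F n) p by []; rewrite e.
rewrite muc_clopen; last exact: clopenU.
by rewrite pm_add // -IHe !muc_clopen.
Qed.

Lemma muc_sigma : semi_sigma_additive muc.
Proof.
move=> F mF tF mU.
have cF i : clopen (F i) := mF i.
have cU : clopen (\bigcup_n F n) := mU.
have cpt : compact (\bigcup_n F n : set cantor_space).
  apply: (subclosed_compact cU.2 cantor_space_compact); exact: subsetT.
move: cpt; rewrite compact_cover => /(_ nat setT F).
case=> [i _|p Up|D' _ cov]; first exact: (cF i).1.
  by case: Up => i _ Fi; exists i.
pose N := (\max_(i <- finmap.enum_fset D') i).+1.
have cov2 : forall p, (\bigcup_n F n) p -> exists j, (j < N)%N /\ F j p.
  move=> p /cov [j /= jD Fj]; exists j; split => //.
  by rewrite ltnS; apply: (@leq_bigmax_seq _ _ xpredT id).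
have F0 i : (N <= i)%N -> F i = set0.
  move=> Ni; apply/seteqP; split => // p Fp.
  have [j [jN Fj]] := cov2 p (ex_intro2 _ _ i I Fp).
  have ij : i != j by rewrite neq_ltn (leq_trans jN Ni) orbT.
  have := (trivIsetP.1 tF) i j I I ij.
  by move=> e; have : (F i `&` F j) p by []; rewrite e.
have E n : (N <= n)%N -> \big[setU/set0]_(i < n) F i = \bigcup_n F n.
  move=> Nn; apply/seteqP; split => p.
    by move=> /big_setU_mem [i [_ Fi]]; exists i.
  by move=> /cov2 [j [jN Fj]]; apply/big_setU_mem; exists j; split => //; exact: leq_trans jN Nn.
apply: cvg_near_cst; exists N => // n /= Nn.
by rewrite big_mkord -(muc_fin cF tF n).2 E.
Qed.

HB.instance Definition _ := isMeasure.Build _ CX RR muc muc0 muc_ge0 muc_sigma.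

End MU.

Lemma open_sclopen (U : set cantor_space) : open U -> <<s @clopen cantor_space >> U.
Proof.
move=> oU.
have [cl [clC clS]] : exists cl : nat -> set X,
  (forall j, clopen (cl j)) /\ (forall C, clopen C -> exists j, cl j = C).
  exact: clopen_enum.
pose F j : set cantor_space := if `[< cl j `<=` U >] then cl j else set0.
have -> : U = \bigcup_j F j.
  apply/seteqP; split; last first.
    by move=> p [j _]; rewrite /F; case: asboolP => // h /h.
  move=> x Ux.
  have := @zero_dimensional_cvg cantor_space x cantor_space_hausdorff
    cantor_zero_dimensional cantor_space_compact U.
  case; first by apply: open_nbhs_nbhs; split.
  move=> D [Dx cD] DU; have [j Ej] := clS D cD.
  exists j => //; rewrite /F; case: asboolP => [_|]; first by rewrite Ej.
  by rewrite Ej.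
apply: sigma_algebra_bigcup => j; rewrite /F; case: asboolP => _.
  by apply: sub_sigma_algebra; exact: clC.
exact: sigma_algebra0.
Qed.

Lemma sopen_sclopen : <<s @open cantor_space >> `<=` <<s @clopen cantor_space >>.
Proof. apply: smallest_sub; [exact: smallest_sigma_algebra|exact: open_sclopen]. Qed.

Lemma sclopen_sopen : <<s @clopen cantor_space >> `<=` <<s @open cantor_space >>.
Proof.
apply: smallest_sub; first exact: smallest_sigma_algebra.
by move=> A [oA _]; exact: sub_sigma_algebra.
Qed.

Section NU.
Variable P : premeas.

Definition nuB : set BX -> \bar RR := fun E => measure_extension (muc P) E.

Lemma nuB0 : nuB set0 = 0%E.
Proof. exact: measure0. Qed.

Lemma nuB_ge0 A : (0 <= nuB A)%E.
Proof. exact: measure_ge0. Qed.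

Lemma nuB_sigma : semi_sigma_additive nuB.
Proof.
move=> F mF tF mU.
exact: (@measure_semi_sigma_additive _ _ _ (measure_extension (muc P)) F
  (fun i => sopen_sclopen (mF i)) tF (sopen_sclopen mU)).
Qed.

HB.instance Definition _ := isMeasure.Build _ BX RR nuB nuB0 nuB_ge0 nuB_sigma.

Lemma nuB_clopen A : clopen A -> nuB A = (pm P A)%:E.
Proof.
move=> cA; rewrite /nuB /measure_extension measurable_mu_extE //.
exact: muc_clopen.
Qed.

Lemma nuB_T : nuB setT = 1%E.
Proof. by rewrite nuB_clopen ?pm_T //; exact: clopenT. Qed.

HB.instance Definition _ := Measure_isProbability.Build _ BX RR nuB nuB_T.

End NU.

Lemma premeas_prob (P : premeas) : exists nu : probability BX RR,
  forall A, clopen A -> nu A = (pm P A)%:E.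
Proof. by exists (nuB P); exact: nuB_clopen. Qed.

Import Order.TTheory GRing.Theory Num.Theory.
Local Open Scope ring_scope.

Lemma cont_measurable (h : X -> X) : continuous h -> measurable_fun [set: BX] (h : BX -> BX).
Proof.
move=> ch; apply: (@measurability _ _ BX BX setT h (@open X)) => //.
move=> _ [B oB <-]; rewrite setTI; apply: sub_sigma_algebra.
by apply: (@open_comp _ _ h) => // x _; exact: ch.
Qed.

Section PF.
Variables (nu : probability BX RR) (h : X -> X).
Hypothesis mh : measurable_fun [set: BX] (h : BX -> BX).

Definition pfw (mh' : measurable_fun [set: BX] (h : BX -> BX)) : set BX -> \bar RR :=
  fun A => nu (h @^-1` A).

Let pfw0 : pfw mh set0 = 0%E.
Proof. by rewrite /pfw preimage_set0 measure0. Qed.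

Let pfw_ge0 A : (0 <= pfw mh A)%E.
Proof. exact: measure_ge0. Qed.

Let pfw_sigma : semi_sigma_additive (pfw mh).
Proof.
move=> F mF tF mUF; rewrite /pfw preimage_bigcup.
apply: measure_semi_sigma_additive.
- by move=> n; rewrite -[X in measurable X]setTI; exact: mh.
- apply/trivIsetP => /= i j _ _ ij; rewrite -preimage_setI.
  by move/trivIsetP : tF => /(_ _ _ _ _ ij) ->//; rewrite preimage_set0.
- by rewrite -preimage_bigcup -[X in measurable X]setTI; exact: mh.
Qed.

HB.instance Definition _ := isMeasure.Build _ BX RR (pfw mh) pfw0 pfw_ge0 pfw_sigma.

End PF.

Lemma measurableBX_E : @measurable _ BX = <<s @clopen cantor_space >>.
Proof.
apply/seteqP; split => A; [exact: sopen_sclopen|exact: sclopen_sopen].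
Qed.

Lemma inv_clopen (nu : probability BX RR) (h : X -> X) : continuous h ->
  (forall C, clopen C -> nu (h @^-1` C) = nu C) ->
  forall E : set BX, measurable E -> nu (h @^-1` E) = nu E.
Proof.
move=> ch HC E mE.
have mh := cont_measurable ch.
have := @measure_unique _ RR BX (@clopen cantor_space) (fun _ => setT) measurableBX_E
  clopenI (fun _ => clopenT) _ nu (pfw nu mh) _ _ E mE.
rewrite /pfw => -> //.
- by apply/seteqP; split => // x _; exists 0%N.
- by move=> A cA; exact: (esym (HC A cA)).
- by move=> _; have := probability_setT nu; rewrite /= => ->; exact: ltry.
Qed.

Import Order.TTheory GRing.Theory Num.Theory.
Import numFieldTopology.Exports numFieldNormedType.Exports.
Local Open Scope ring_scope.

Section KS.
Variable R : realType.
Definition K := prod_topology (fun _ : nat => (R : topologicalType)).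

Lemma K_compact : compact [set f : K | forall i, `[0, 1]%classic (f i)].
Proof.
exact: (@tychonoff nat (fun _ => (R : topologicalType)) (fun _ => `[0, 1]%classic)
  (fun _ => @segment_compact R 0 1)).
Qed.

Lemma K_proj (j : nat) : continuous (fun f : K => f j).
Proof. exact: (@proj_continuous nat (fun _ => (R : topologicalType)) j). Qed.

Lemma closed_eq0 (phi : K -> R) : continuous phi -> closed [set f | phi f = 0].
Proof.
move=> cphi; apply: (@preimage_closed _ _ phi [set x : R | x = 0]).
  by move=> x _; exact: cphi.
exact: closed_eq.
Qed.

Lemma closed_le0 (phi : K -> R) : continuous phi -> closed [set f | phi f <= 0].
Proof.
move=> cphi; apply: (@preimage_closed _ _ phi [set x : R | x <= 0]).
  by move=> x _; exact: cphi.
exact: closed_le.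
Qed.

Lemma contB (p q : K -> R) : continuous p -> continuous q -> continuous (fun f => p f - q f).
Proof.
move=> cp cq f.
have -> : (fun g : K => p g - q g) = (p - q)%R by apply: funext => g.
exact: (continuousB (cp f) (cq f)).
Qed.

Lemma cont3 j1 j2 j3 : continuous (fun f : K => f j3 - f j1 - f j2).
Proof. by apply: contB; [apply: contB|]; exact: K_proj. Qed.

Lemma cont2 j1 j2 : continuous (fun f : K => f j1 - f j2).
Proof. by apply: contB; exact: K_proj. Qed.

Lemma cont1 j1 : continuous (fun f : K => f j1 - 1).
Proof.
apply: (@contB (fun f : K => f j1) (fun _ => 1)); first exact: K_proj.
exact: cst_continuous.
Qed.

Lemma cluster_closed (x : nat -> K) (f : K) (C : set K) :
  cluster (x @ \oo) f -> closed C -> (exists N, forall m, (N <= m)%N -> C (x m)) -> C f.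
Proof.
move=> clf cC [N HN]; apply: cC => B nB; apply: clf nB.
by exists N => // m /= Nm; exact: HN.
Qed.

End KS.

Import Order.TTheory GRing.Theory Num.Theory.
Import numFieldTopology.Exports numFieldNormedType.Exports.
Local Open Scope ring_scope.

Lemma limit_prob (G : groupType) (a : G -> X -> X) (cl : nat -> set X)
  (clC : forall j, clopen (cl j)) (clS : forall C, clopen C -> exists j, cl j = C)
  (bs : nat -> G -> X -> X) (mus : nat -> probability BX RR) (A B : set X) :
  clopen A -> clopen B -> is_action a ->
  (forall m, Defs.invariant (bs m) (mus m)) ->
  (forall g C, clopen C -> exists N, forall m, (N <= m)%N -> bs m g @^-1` C = a g @^-1` C) ->
  (forall m, (mus m B <= mus m A)%E) ->
  exists nu : probability BX RR, Defs.invariant a nu /\ (nu B <= nu A)%E.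
Proof.
move=> cA cB aa binv bconv bBA.
have [idx Hidx] : {idx : set X -> nat & forall C, clopen C -> cl (idx C) = C}.
  apply: (@choice (set X) nat (fun C j => clopen C -> cl j = C)) => C.
  have [cC|ncC] := pselect (clopen C); last by exists 0%N.
  by have [j Hj] := clS C cC; exists j.
have mcl C : clopen C -> measurable (C : set BX).
  by move=> cC; apply: sub_sigma_algebra; exact: cC.1.
pose x m : K RR := fun j => fine (mus m (cl j)).
have xj m j : mus m (cl j) = (x m j)%:E.
  by rewrite /x fineK //; apply: fin_num_measure; exact: mcl.
have xE m C : clopen C -> mus m C = (x m (idx C))%:E.
  by move=> cC; rewrite -xj Hidx.
have x01 m j : `[0, 1]%classic (x m j).
  rewrite /= in_itv /=; apply/andP; split.
    by rewrite -lee_fin -xj; exact: measure_ge0.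
  by rewrite -lee_fin -xj; apply: probability_le1; exact: mcl.
have [f [Qf clf]] : exists f, [set f : K RR | forall i, `[0, 1]%classic (f i)] f /\
    cluster (x @ \oo) f.
  have PF : ProperFilter (x @ \oo) by apply: fmap_proper_filter.
  have FQ : (x @ \oo) [set f : K RR | forall i, `[0, 1]%classic (f i)].
    by exists 0%N => // m _ j; exact: x01.
  have [f [Qf clf]] := @K_compact RR (x @ \oo) PF FQ.
  by exists f.
pose nu0 (C : set cantor_space) : RR := f (idx C).
have ev_all (Pr : K RR -> Prop) : closed Pr -> (forall m, Pr (x m)) -> Pr f.
  move=> cP H; apply: (cluster_closed clf cP); exists 0%N => m _; exact: H.
have addH : forall C1 C2, clopen C1 -> clopen C2 -> C1 `&` C2 = set0 ->
    nu0 (C1 `|` C2) = nu0 C1 + nu0 C2.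
  move=> C1 C2 c1 c2 d; have c3 := clopenU c1 c2.
  have h : f (idx (C1 `|` C2)) - f (idx C1) - f (idx C2) = 0.
    apply: (ev_all [set g | g (idx (C1 `|` C2)) - g (idx C1) - g (idx C2) = 0]
      (closed_eq0 (@cont3 RR _ _ _))) => m /=.
    have e3 : (mus m (C1 `|` C2) = mus m C1 + mus m C2)%E.
      exact: (measureU (mus m) (mcl _ c1) (mcl _ c2) d).
    move: e3; rewrite !xE // -EFinD => -[e]; rewrite e; lra.
  rewrite /nu0; lra.
have ge0H : forall C, clopen C -> 0 <= nu0 C.
  by move=> C _; have := Qf (idx C); rewrite /= in_itv /= => /andP[].
have TH : nu0 setT = 1.
  have h : f (idx setT) - 1 = 0.
    apply: (ev_all [set g | g (idx setT) - 1 = 0] (closed_eq0 (@cont1 RR _))) => m /=.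
    have := probability_setT (mus m).
    rewrite xE; last exact: clopenT.
    by move=> -[->]; lra.
  rewrite /nu0; lra.
have [nu Hnu] := premeas_prob (@PreMeas nu0 addH ge0H TH).
exists nu; split.
  move=> g E mE.
  have ca : continuous (a g) by case: aa => /(_ g) [g' [_ _ c _]].
  refine (inv_clopen ca _ mE) => C cC.
  have cpre : clopen (a g @^-1` C) := preimage_clopen cC ca.
  rewrite !Hnu //=; congr EFin.
  have [N HN] := bconv g C cC.
  have h : f (idx (a g @^-1` C)) - f (idx C) = 0.
    apply: (cluster_closed clf (closed_eq0 (@cont2 RR (idx (a g @^-1` C)) (idx C)))).
    exists N => m Nm /=.
    have := binv m g C (mcl _ cC); rewrite HN // !xE // => -[->]; lra.
  rewrite /nu0; lra.
rewrite !Hnu //= lee_fin.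
have h : f (idx B) - f (idx A) <= 0.
  apply: (ev_all [set g | g (idx B) - g (idx A) <= 0] (closed_le0 (@cont2 RR _ _))) => m /=.
  have := bBA m; rewrite !xE // lee_fin => h2; lra.
rewrite /nu0; lra.
Qed.

Import Order.TTheory GRing.Theory Num.Theory.

Lemma act_pre (G : groupType) (b : G -> X -> X) g (C : set X) :
  is_action b -> b g @^-1` C = b (g^-1)%g @` C.
Proof.
move=> [_ b1 bM]; apply/seteqP; split => x.
  move=> Cx; exists (b g x) => //.
  by rewrite -[b _ (b _ x)]/((b g^-1 \o b g) x)%g -bM mulVg b1.
move=> [y Cy <-] /=.
by rewrite -[b g (b _ y)]/((b g \o b g^-1) y)%g -bM mulgV b1.
Qed.

Section DC.
Variable G : groupType.
Variables (ge : nat -> G) (cl : nat -> set X).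
Hypothesis geS : forall g, exists n, ge n = g.
Hypothesis clC : forall j, clopen (cl j).
Hypothesis clS : forall C, clopen C -> exists j, cl j = C.
Local Notation act := (G -> X -> X).

Definition Pre (a : act) (A B : set X) :=
  forall mu : probability BX RR, Defs.invariant a mu -> (mu A < mu B)%E.

Lemma Op_pre (A B : set X) : clopen A -> clopen B -> Op (fun a : act => Pre a A B).
Proof.
move=> cA cB a aa Pa; apply: contrapT => nNB.
pose agr m (b : act) := forall i j : 'I_m, b (ge i) @` cl j = a (ge i) @` cl j.
have NBagr m : NB a (agr m).
  refine (NB_fin _) => i.
  refine (@NB_fin _ a 'I_m (fun j b => b (ge i) @` cl j = a (ge i) @` cl j) _) => j.
  exact: NB_self.
have H m : exists p : act * probability BX RR,
    [/\ is_action p.1, agr m p.1, Defs.invariant p.1 p.2 & (p.2 B <= p.2 A)%E].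
  apply: contrapT => nH; apply: nNB; refine (NB_mono (NBagr m) _) => b ab hb mu imu.
  rewrite ltNge; apply/negP => le; apply: nH; by exists (b, mu).
have [bm Hbm] := choice H.
have Hinv m : Defs.invariant (bm m).1 (bm m).2 by case: (Hbm m).
have Hle m : ((bm m).2 B <= (bm m).2 A)%E by case: (Hbm m).
have bconv : forall g C, clopen C -> exists N, forall m, (N <= m)%N ->
    (bm m).1 g @^-1` C = a g @^-1` C.
  move=> g C cC; have [i Hi] := geS (g^-1)%g; have [j Hj] := @clS C cC.
  exists (i + j).+1 => m Nm.
  have [ab hb _ _] := Hbm m.
  have im : (i < m)%N by apply: leq_trans Nm; rewrite ltnS leq_addr.
  have jm : (j < m)%N by apply: leq_trans Nm; rewrite ltnS leq_addl.
  rewrite (act_pre _ _ ab) (act_pre _ _ aa) -Hi -Hj.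
  exact: (hb (Ordinal im) (Ordinal jm)).
have [nu [inu le]] := @limit_prob G a cl clC clS (fun m => (bm m).1) (fun m => (bm m).2)
  A B cA cB aa Hinv bconv Hle.
by have := Pa nu inu; rewrite ltNge le.
Qed.

Lemma dc_Gd : Gd (@dyn_comparison G).
Proof.
have bnd0 (C : set X) : bounded (C `*` [set 0%N] : set Y).
  by exists 1%N => x n n1 [_ /= n0]; move: n1; rewrite n0.
have H : Gd (fun a : act => forall jA jB : nat, cl jA !=set0 -> cl jB !=set0 ->
   Pre a (cl jA) (cl jB) -> tle a (cl jA `*` [set 0%N]) (cl jB `*` [set 0%N])).
  refine (Gd_forall _) => jA; refine (Gd_forall _) => jB.
  apply: Gd_impl_const => _; apply: Gd_impl_const => _.
  apply: (Gd_imp geS clC clS); first exact: Op_pre.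
  exact: Op_tle.
refine (Gd_ext _ H) => a aa; split.
  move=> Hd A B cA cB.
  have [jA ?] := @clS A cA; subst; have [jB ?] := @clS B cB; subst.
  exact: Hd.
move=> Hd jA jB nA nB Pab; exact: (Hd _ _ (clC jA) (clC jB) nA nB Pab).
Qed.

End DC.


Local Close Scope ring_scope.

Theorem mainTheorem19 (G : groupType)
  (G_countable : countable [set: G]) (G_infinite : infinite_set [set: G]) :
  [/\ A_Gdelta (@dyn_comparison G),
      A_Gdelta (@almost_unperforated G),
      A_Gdelta (@unperforated G),
      A_Gdelta (@cancellative G) &
      A_Gdelta (@tle_partial_order G)].
Proof.
have [ge geS] := group_enum G_countable.
have [cl [clC clS]] := clopen_enum.
split; apply: Gd_A.
- exact: (dc_Gd geS clC clS).
- exact: (aunperf_Gd geS clC clS).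
- exact: (unperf_Gd geS clC clS).
- exact: (cancel_Gd geS clC clS).
- exact: (po_Gd geS clC clS).
Qed.
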